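(* Fix $n\ge4$ and a circular ordering $\pi$. For every chain $\mathcal C: D_0\subsetneq D_1\subsetneq\dots\subsetneq D_m$ of sets of pairwise noncrossing diagonals of $P_n$, let $\Delta_{\mathcal C}$ be the corresponding simplex of the barycentric subdivision of $K_{n-1}$ (the convex hull of the barycenters $v_{D_0},\dots,v_{D_m}$ of the corresponding faces), and define $\Phi$ on $\Delta_{\mathcal C}$ affinely by $\Phi\big(\sum_i a_i v_{D_i}\big)=\sum_i a_i\Phi(D_i)$ ($a_i\ge0$, $\sum a_i=1$), so that $\Phi(\Delta_{\mathcal C})$ is the convex hull of $\Phi(D_0),\dots,\Phi(D_m)$. Then $\Phi$ restricted to each $\Delta_{\mathcal C}$ is an embedding into the chamber $\Delta_\pi$ of $\mathfrak S_n$, these maps agree on common faces, and together they define an embedding of the associahedron $K_{n-1}$ (the union of all $\Delta_{\mathcal C}$) into the chamber $\Delta_\pi$ of $\mathfrak S_n$.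
   Context: Fix a circular ordering $\pi=(x_1,\dots,x_n)$ of a set $X$ of $n\ge4$ labels and let $P_n$ be a regular $n$-gon with edges labeled cyclically by $x_1,\dots,x_n$. Diagonals of $P_n$ correspond bijectively to nontrivial splits of $X$ circular w.r.t. $\pi$ (a diagonal separates the edge labels into the two parts); two diagonals cross if they meet in the interior of $P_n$. The chamber $\Delta_\pi$ of the network space $\mathfrak S_n$ is identified with $\{x\in\mathbb R_{\ge0}^{\mathcal D}:\sum_d x_d=1\}$, where $\mathcal D$ is the set of the $n(n-3)/2$ diagonals of $P_n$. The associahedron $K_{n-1}$ is the $(n-3)$-dimensional convex polytope whose faces correspond bijectively to sets $D$ of pairwise noncrossing diagonals of $P_n$, the face of $D$ containing the face of $D'$ iff $D\subseteq D'$; the face of $D$ has codimension $|D|$, vertices correspond to triangulations ($n-3$ diagonals), and the whole polytope corresponds to $D=\emptyset$. For a triangulation $T$, $\Phi(T)\in\mathbb R^{\mathcal D}$ has $d$-coordinate $1/(n-3)$ if $d\in T$ and $0$ otherwise. For a set $D$ of pairwise noncrossing diagonals, $\Phi(D)$ (the image of the barycenter $v_D$ of the face of $D$) is the average of $\Phi(T)$ over all triangulations $T\supseteq D$. *)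

(* Defs.v *)
From HB Require Import structures.
From mathcomp Require Import all_boot all_order all_algebra.
Set Implicit Arguments. Unset Strict Implicit. Unset Printing Implicit Defensive.
Import Order.TTheory GRing.Theory Num.Theory.

(* Vertices of P_n are labelled 0..n-1 cyclically; the edge labelled x_k
   joins vertices k-1 and k (any fixed cyclic convention).  A diagonal is an
   unordered pair {i,j} of non-adjacent vertices, stored as (i,j) with i < j. *)
Definition is_diag (n : nat) (p : 'I_n * 'I_n) : bool :=
  (p.1.+1 < p.2) && ~~ ((p.1 == 0 :> nat) && (p.2 == n.-1 :> nat)).

Definition diagonal (n : nat) := {p : 'I_n * 'I_n | is_diag p}.

(* two diagonals cross iff they meet in the interior of P_n,
   i.e. their endpoints strictly interleave *)
Definition crosses (n : nat) (d e : diagonal n) : bool :=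
  let: (i, j) := val d in let: (k, l) := val e in
  [&& i < k, k < j & j < l] || [&& k < i, i < l & l < j].

Definition noncrossing (n : nat) (D : {set diagonal n}) : bool :=
  [forall d in D, forall e in D, ~~ crosses d e].

Definition triangulation (n : nat) (T : {set diagonal n}) : bool :=
  noncrossing T && [forall d, noncrossing (d |: T) ==> (d \in T)].

Local Open Scope ring_scope.

Definition PhiT (R : realFieldType) (n : nat) (T : {set diagonal n})
    (d : diagonal n) : R :=
  if d \in T then ((n - 3)%N%:R)^-1 else 0.

Definition Phi (R : realFieldType) (n : nat) (D : {set diagonal n})
    (d : diagonal n) : R :=
  (#|[set T : {set diagonal n} | triangulation T && (D \subset T)]|%:R)^-1 *
  \sum_(T : {set diagonal n} | triangulation T && (D \subset T)) PhiT R T d.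

(* The chamber Delta_pi = standard simplex in R^{diagonals} *)
Definition in_chamber (R : realFieldType) (n : nat) (x : diagonal n -> R) : Prop :=
  (forall d, 0 <= x d) /\ \sum_d x d = 1.

(* A point of K_{n-1}, realized as its barycentric subdivision: a convex
   combination sum_i a_i v_{D_i} of barycenters of faces, where the D_i with
   nonzero weight form a chain of noncrossing sets (a simplex Delta_C). It is
   recorded as the weight function D |-> a_D on sets of diagonals. *)
Definition K_point (R : realFieldType) (n : nat) (w : {set diagonal n} -> R) : Prop :=
  [/\ forall D, 0 <= w D,
      \sum_D w D = 1,
      forall D, w D != 0 -> noncrossing D
    & forall D E, w D != 0 -> w E != 0 -> (D \subset E) || (E \subset D)].

Definition Phi_ext (R : realFieldType) (n : nat) (w : {set diagonal n} -> R)
    (d : diagonal n) : R :=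
  \sum_D w D * Phi R D d.

(* Main.v *)
Require Import Defs.
From HB Require Import structures.
From mathcomp Require Import all_boot all_order all_algebra.
From mathcomp Require Import zify ring lra.
Import Order.TTheory GRing.Theory Num.Theory.
Set Implicit Arguments. Unset Strict Implicit. Unset Printing Implicit Defensive.

Definition cr (a b c k : nat) := [&& a < c, c < b & b < k] || [&& c < a, a < k & k < b].
Definition cvA (c k a b u : nat) := [&& c <= a, b <= k, a < u & u < b].
Definition cvB (c k a b v : nat) := (((b <= c) || (k <= a)) && (a < v < b)) ||
  [&& a <= c, k <= b & (b < v) || (v < a)].
Lemma arK1 (a b c k u v : nat) :
 ~~ cr c k a b -> ~~ ((a == c) && (b == k)) -> c < u < k -> (v < c) || (k < v) -> a < b ->
 cr (minn u v) (maxn u v) a b -> cvA c k a b u || cvB c k a b v.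
Proof. rewrite /cr /cvA /cvB. lia. Qed.
Lemma arK2A (a b c k u x y : nat) :
 ~~ ((a == c) && (b == k)) -> cvA c k a b u -> x < y -> ~~ cr a b x y ->
 let u' := if c < a then a else b in
 (c < u' < k) && (cvA c k x y u' ==> cvA c k x y u) && ~~ cvA c k a b u'.
Proof. rewrite /cr /cvA /=; case: ifP => H; lia. Qed.
Lemma arK2B (a b c k v x y : nat) : c + 1 < k ->
 ~~ ((a == c) && (b == k)) -> cvB c k a b v -> a < b -> x < y -> ~~ cr a b x y -> ~~ cr c k a b -> ~~ cr c k x y ->
 let v' := if b <= c then a else if k <= a then b else if a < c then a else b in
 ((v' < c) || (k < v')) && (cvB c k x y v' ==> cvB c k x y v) && ~~ cvB c k a b v'.
Proof. rewrite /cr /cvB /=; case: ifP => H1; try case: ifP => H2; try case: ifP => H3; lia. Qed.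
Lemma arMk (c k u v n : nat) : c < u < k -> (v < c) || (k < v) -> k < n -> v < n ->
  [/\ minn u v + 1 < maxn u v, maxn u v < n & ~~ ((minn u v == 0) && (maxn u v == n.-1))].
Proof. move=> *; split; lia. Qed.
Lemma arCr (c k u v : nat) : c < u < k -> (v < c) || (k < v) -> cr c k (minn u v) (maxn u v).
Proof. rewrite /cr; lia. Qed.

Section Comb.
Variable n : nat.
Implicit Types (d e f g : diagonal n) (D E T : {set diagonal n}).
Definition o1 (d : diagonal n) : 'I_n := (val d).1.
Definition o2 (d : diagonal n) : 'I_n := (val d).2.
Definition fs (d : diagonal n) : nat := o1 d.
Definition sn (d : diagonal n) : nat := o2 d.
Arguments o1 : simpl never.
Arguments o2 : simpl never.
Arguments fs : simpl never.
Arguments sn : simpl never.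
Lemma crossesE d e : crosses d e = cr (fs d) (sn d) (fs e) (sn e).
Proof. by case: d => [[i j] ?]; case: e => [[k l] ?]. Qed.
Lemma diagP d : [/\ fs d < sn d, sn d < n, fs d + 1 < sn d & ~~ ((fs d == 0) && (sn d == n.-1))].
Proof. case: d => [[i j] /= H]; case/andP: (H) => H1 H2; rewrite /fs /sn /o1 /o2 /=.
have := ltn_ord i; have := ltn_ord j. move=> Hj Hi; rewrite /= in H1 H2. split => //; lia. Qed.
Lemma diag_lt d : fs d < sn d.
Proof. by case: (diagP d). Qed.
Lemma crossesC d e : crosses d e = crosses e d.
Proof. rewrite !crossesE /cr. lia. Qed.
Lemma crosses_irr d : crosses d d = false.
Proof. rewrite crossesE /cr; lia. Qed.
Lemma diag_eq d e : fs d = fs e -> sn d = sn e -> d = e.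
Proof.
case: d => [[i j] Hd]; case: e => [[k l] He]; rewrite /fs /sn /o1 /o2 /= => H1 H2.
apply/val_inj => /=. by rewrite (ord_inj H1) (ord_inj H2).
Qed.
Lemma mk_ex (u v : nat) : u + 1 < v -> v < n -> ~~ ((u == 0) && (v == n.-1)) ->
  exists e, fs e = u /\ sn e = v.
Proof.
move=> H1 H2 H3.
have Hu : u < n by lia.
have Hd : is_diag (Ordinal Hu, Ordinal H2) by rewrite /is_diag /=; apply/andP; split => //; lia.
by exists (exist (fun p => is_diag p) _ Hd).
Qed.
Lemma noncrossingP D : reflect (forall d e, d \in D -> e \in D -> ~~ crosses d e) (noncrossing D).
Proof.
apply: (iffP forall_inP) => [H d e Hd He | H d Hd].
  by have /forall_inP := H d Hd; apply.
by apply/forall_inP => e He; apply: H.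
Qed.
Lemma noncrossing_sub D E : D \subset E -> noncrossing E -> noncrossing D.
Proof.
move=> /subsetP sDE /noncrossingP H; apply/noncrossingP => d e Hd He; apply: H; exact: sDE.
Qed.
Lemma noncrossing_U1 g T : noncrossing (g |: T) = noncrossing T && [forall f in T, ~~ crosses g f].
Proof.
apply/idP/andP => [H|[H1 /forall_inP H2]].
  split; first by apply: noncrossing_sub H; apply: subsetUr.
  apply/forall_inP => f Hf; move/noncrossingP: H; apply; rewrite !inE ?eqxx ?Hf ?orbT //.
apply/noncrossingP => d e; rewrite !inE => /orP [/eqP->|Hd] /orP [/eqP->|He].
- by rewrite crosses_irr.
- exact: H2.
- by rewrite crossesC; apply: H2.
- by move/noncrossingP: H1; apply.
Qed.

Lemma ext_tri D : noncrossing D -> exists T, triangulation T /\ D \subset T.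
Proof.
move=> HD.
have [T /maxsetP [HT Hmax] sDT] := maxset_exists (P := fun X : {set diagonal n} => noncrossing X) HD.
exists T; split => //; apply/andP; split => //.
apply/forallP => f; apply/implyP => Hf.
have E : f |: T = T by apply: Hmax => //; apply: subsetUr.
by rewrite -E setU11.
Qed.

Section KeyC.
Variables (D : {set diagonal n}) (d : diagonal n).
Hypotheses (HD : noncrossing (d |: D)) (HdD : d \notin D).
Definition covA f (u : nat) := cvA (fs d) (sn d) (fs f) (sn f) u.
Definition covB f (v : nat) := cvB (fs d) (sn d) (fs f) (sn f) v.
Definition depth u v := #|[set f in D | covA f u]| + #|[set f in D | covB f v]|.
Lemma ncD : noncrossing D.
Proof. by apply: noncrossing_sub HD; apply: subsetUr. Qed.

Lemma fD f : f \in D -> ~~ cr (fs d) (sn d) (fs f) (sn f) /\ ~~ ((fs f == fs d) && (sn f == sn d)).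
Proof.
move=> Hf; split.
  rewrite -crossesE. by move/noncrossingP: HD; apply; rewrite !inE ?eqxx ?Hf ?orbT.
apply/negP => /andP [/eqP h1 /eqP h2].
have Efd : f = d by apply: diag_eq.
by move: HdD; rewrite -Efd Hf.
Qed.
Lemma fD2 f g : f \in D -> g \in D -> ~~ cr (fs f) (sn f) (fs g) (sn g).
Proof. move=> Hf Hg; rewrite -crossesE; by move/noncrossingP: ncD; apply. Qed.

Lemma K1 f e u v : f \in D -> fs d < u < sn d -> (v < fs d) || (sn d < v) ->
  fs e = minn u v -> sn e = maxn u v -> crosses e f -> covA f u || covB f v.
Proof.
move=> Hf Hu Hv E1 E2; rewrite crossesE E1 E2 => Hc.
have [H1 H2] := fD Hf; have [? ? ? ?] := diagP f.
exact: arK1.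
Qed.

Lemma K2A f u : f \in D -> covA f u -> exists u', fs d < u' < sn d /\
  #|[set g in D | covA g u']| < #|[set g in D | covA g u]|.
Proof.
move=> Hf Hc; have [H1 H2] := fD Hf.
set u' := if fs d < fs f then fs f else sn f.
have Hall : forall x y, x < y -> ~~ cr (fs f) (sn f) x y ->
  (fs d < u' < sn d) && (cvA (fs d) (sn d) x y u' ==> cvA (fs d) (sn d) x y u)
   && ~~ cvA (fs d) (sn d) (fs f) (sn f) u'.
  move=> x y Hxy Hc1. exact: arK2A.
have Hf1 : ~~ cr (fs f) (sn f) (fs f) (sn f) by rewrite -crossesE crosses_irr.
exists u'; split.
  by case/andP: (Hall _ _ (diag_lt f) Hf1) => /andP [].
apply: proper_card; apply/properP; split.
  apply/subsetP => g; rewrite !inE => /andP [Hg Hcg]; rewrite Hg /=.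
  have [? ? ? ?] := diagP g.
  have := Hall (fs g) (sn g) ltac:(done) (fD2 Hf Hg).
  by case/andP => /andP [_ /implyP H] _; apply: H.
exists f; first by rewrite inE Hf.
rewrite inE Hf /=. by case/andP: (Hall _ _ (diag_lt f) Hf1).
Qed.

Lemma K2B f v : f \in D -> covB f v -> exists v', ((v' < fs d) || (sn d < v')) /\ v' < n /\
  #|[set g in D | covB g v']| < #|[set g in D | covB g v]|.
Proof.
move=> Hf Hc; have [H1 H2] := fD Hf.
have [? ? ? ?] := diagP f; have [? ? ? ?] := diagP d.
set v' := if sn f <= fs d then fs f else if sn d <= fs f then sn f else if fs f < fs d then fs f else sn f.
have Hall : forall x y, x < y -> ~~ cr (fs f) (sn f) x y -> ~~ cr (fs d) (sn d) x y ->
  ((v' < fs d) || (sn d < v')) && (cvB (fs d) (sn d) x y v' ==> cvB (fs d) (sn d) x y v)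
   && ~~ cvB (fs d) (sn d) (fs f) (sn f) v'.
  move=> x y Hxy Hc1 Hc2. apply: arK2B => //.
have Hf1 : ~~ cr (fs f) (sn f) (fs f) (sn f) by rewrite -crossesE crosses_irr.
exists v'; split.
  by case/andP: (Hall _ _ (diag_lt f) Hf1 H1) => /andP [].
split. rewrite /v'; repeat case: ifP => _ //; lia.
apply: proper_card; apply/properP; split.
  apply/subsetP => g; rewrite !inE => /andP [Hg Hcg]; rewrite Hg /=.
  have [? ? ? ?] := diagP g.
  have := Hall (fs g) (sn g) ltac:(done) (fD2 Hf Hg) (fD Hg).1.
  by case/andP => /andP [_ /implyP H] _; apply: H.
exists f; first by rewrite inE Hf.
rewrite inE Hf /=. by case/andP: (Hall _ _ (diag_lt f) Hf1 H1).
Qed.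

Lemma KC_ind k : forall u v, fs d < u < sn d -> (v < fs d) || (sn d < v) -> v < n ->
  depth u v < k -> exists e, crosses d e /\ noncrossing (e |: D).
Proof.
elim: k => [//|k IH] u v Hu Hv Hn Hdep.
have [? ? ? ?] := diagP d.
have [M1 M2 M3] := @arMk (fs d) (sn d) u v n Hu Hv ltac:(done) Hn.
have [e [E1 E2]] := mk_ex M1 M2 M3.
case: (boolP [exists f in D, crosses e f]) => [/exists_inP [f Hf Hc] | Hno].
  case/orP: (K1 Hf Hu Hv E1 E2 Hc) => [HA|HB].
    have [u' [Hu' Hlt]] := K2A Hf HA.
    apply: (IH u' v) => //. move: Hdep; rewrite /depth. lia.
  have [v' [Hv' [Hn' Hlt]]] := K2B Hf HB.
  apply: (IH u v') => //. move: Hdep; rewrite /depth. lia.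
exists e; split.
  by rewrite crossesE E1 E2; apply: arCr.
rewrite noncrossing_U1 ncD /=. apply/forall_inP => f Hf.
apply/negP => Hc; move/negP: Hno; apply; apply/exists_inP; by exists f.
Qed.
End KeyC.

Lemma keyC D d : noncrossing (d |: D) -> d \notin D -> exists e, crosses d e /\ noncrossing (e |: D).
Proof.
move=> HD HdD.
have [? ? ? ?] := diagP d.
pose v := if sn d < n.-1 then (sn d).+1 else (fs d).-1.
apply: (@KC_ind D d HD HdD (depth D d (fs d).+1 v).+1 (fs d).+1 v) => //.
- lia.
- rewrite /v; case: ifP => ?; lia.
- rewrite /v; case: ifP => ?; lia.
Qed.
End Comb.

Lemma o1E n (d : diagonal n) : nat_of_ord (o1 d) = fs d. Proof. by []. Qed.
Lemma o2E n (d : diagonal n) : nat_of_ord (o2 d) = sn d. Proof. by []. Qed.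
Ltac nlia := rewrite ?o1E ?o2E; lia.

Section Size.
Variable n : nat.
Implicit Types (d e f g : diagonal n) (D E T : {set diagonal n}) (S : {set 'I_n}).

Definition sdiag S d := [&& o1 d \in S, o2 d \in S,
  [exists x in S, fs d < x < sn d] & [exists x in S, (x < fs d) || (sn d < x)]].
Definition maxnc S T := [/\ {subset T <= [pred f | sdiag S f]}, noncrossing T &
  forall g, sdiag S g -> noncrossing (g |: T) -> g \in T].

Lemma sdiag_subset S S' g : S \subset S' -> sdiag S g -> sdiag S' g.
Proof.
move=> /subsetP sS /and4P [h1 h2 /exists_inP [x hx hx'] /exists_inP [z hz hz']].
apply/and4P; split; try by apply: sS.
  by apply/exists_inP; exists x => //; apply: sS.
by apply/exists_inP; exists z => //; apply: sS.
Qed.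

Lemma card3 (A : {set 'I_n}) a b c : a \in A -> b \in A -> c \in A ->
  a != b -> b != c -> a != c -> 3 <= #|A|.
Proof.
move=> ha hb hc nab nbc nac.
have -> : 3 = #|a |: (b |: [set c])|.
  rewrite !cardsU1 cards1 !inE (negbTE nab) (negbTE nbc) (negbTE nac). done.
apply: subset_leq_card; apply/subsetP => x; rewrite !inE => /orP [/eqP->|/orP [/eqP->|/eqP->]] //.
Qed.

Lemma exmin (A : {set 'I_n}) : A != set0 -> exists2 x, x \in A & forall y, y \in A -> (x <= y)%N.
Proof.
case/set0Pn => x0 hx0.
case: (arg_minnP (fun i : 'I_n => nat_of_ord i) hx0) => x hx hmin.
by exists x.
Qed.

Lemma minD (A : {set 'I_n}) k : k.+1 < #|A| -> exists2 x, x \in A &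
  (forall y, y \in A -> x <= y) /\ #|A :\ x| = #|A| - 1 /\ k < #|A :\ x|.
Proof.
move=> hk.
have hA : A != set0 by rewrite -card_gt0; apply: leq_ltn_trans hk.

have [x hx hmin] := exmin hA.
exists x => //; split => //.
have := cardsD1 x A; rewrite hx /=. move=> H. rewrite H in hk *. split; [by rewrite addKn| lia].
Qed.

Lemma four S : 3 < #|S| -> exists a b c z, [/\ a \in S, b \in S, c \in S, z \in S &
  [/\ (a : nat) < b, (b : nat) < c & (c : nat) < z]].
Proof.
move=> h.
have [a ha [hma [ca _]]] := @minD S 2 h.
have [b hb [hmb [cb _]]] := @minD (S :\ a) 1 ltac:(lia).
have [c hc [hmc [cc _]]] := @minD (S :\ a :\ b) 0 ltac:(lia).
have : S :\ a :\ b :\ c != set0 by rewrite -card_gt0; lia.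
case/set0Pn => z hz.
move: hb hc hz; rewrite !inE => /andP [nba hb] /andP [ncb /andP [nca hc]] /and4P [nzc nzb nza hz].
exists a, b, c, z; split => //.
have h1 := hma b hb.
have h2 : b <= c by apply: hmb; rewrite !inE nca hc.
have h3 : c <= z by apply: hmc; rewrite !inE nzb nza hz.
move: nba ncb nzc. rewrite -!val_eqE /= => *; split; lia.
Qed.

Lemma sdiag_ex S : 3 < #|S| -> exists g, sdiag S g.
Proof.
case/four => a [b [c [z [ha hb hc hz [hab hbc hcz]]]]].
have hzn := ltn_ord z.
have [g [g1 g2]] := @mk_ex n a c ltac:(lia) (ltn_ord c) ltac:(lia).
have e1 : o1 g = a by apply: ord_inj.
have e2 : o2 g = c by apply: ord_inj.
exists g; apply/and4P; split; rewrite ?e1 ?e2 //.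
  apply/exists_inP; exists b => //; rewrite g1 g2; lia.
apply/exists_inP; exists z => //; rewrite g1 g2; lia.
Qed.

Lemma arSide (p q a b : nat) : ~~ cr p q a b -> a < b -> ~~ ((p <= a) && (b <= q)) ->
  ((a <= p) || (q <= a)) && ((b <= p) || (q <= b)).
Proof. rewrite /cr; lia. Qed.

Section Split.
Variables (S : {set 'I_n}) (T : {set diagonal n}) (d : diagonal n).
Hypotheses (HT : maxnc S T) (Hd : d \in T).
Definition S1 := [set x in S | (fs d) <= x <= (sn d)].
Definition S2 := [set x in S | (x <= (fs d)) || ((sn d) <= x)].
Definition T1 := [set f in T | sdiag S1 f].
Definition T2 := [set f in T | sdiag S2 f].

Lemma HdS : sdiag S d.
Proof. by case: HT => H _ _; apply: H. Qed.
Lemma pq : (fs d) < (sn d).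
Proof. exact: diag_lt. Qed.

Lemma side f : f \in T -> f != d -> sdiag S1 f || sdiag S2 f.
Proof.
move=> Hf nfd.
case: HT => Hsub Hnc _.
have /and4P [F1 F2 /exists_inP [x' hx' hx'b] /exists_inP [z' hz' hz'o]] := Hsub f Hf.
have Hc : ~~ cr (fs d) (sn d) (fs f) (sn f) by rewrite -crossesE; move/noncrossingP: Hnc; apply.
have Hne : ~~ ((fs f == (fs d)) && (sn f == (sn d))).
  apply/negP => /andP [/eqP h1 /eqP h2]; move/negP: nfd; apply; apply/eqP; exact: diag_eq.
have hpq := pq; have hab := diag_lt f.
have [P1 P2 _ _] := and4P HdS.
case: (boolP (((fs d) <= fs f) && (sn f <= (sn d)))) => hin.
  apply/orP; left; apply/and4P; split.
  - by rewrite inE F1 /=; clear -hin hab; nlia.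
  - by rewrite inE F2 /=; clear -hin hab; nlia.
  - apply/exists_inP; exists x' => //; rewrite inE hx' /=; clear -hin hx'b; nlia.
  - apply/exists_inP; case: (ltnP (fs d) (fs f)) => hp.
      exists (o1 d); last by clear -hp; nlia.
      by rewrite inE P1 /=; clear -hpq; nlia.
    exists (o2 d); last by clear -hp hin Hne; nlia.
    by rewrite inE P2 /=; clear -hpq; nlia.
have /andP [sa sb] := arSide Hc hab hin.
apply/orP; right; apply/and4P; split.
- by rewrite inE F1 /= o1E.
- by rewrite inE F2 /= o2E.
- apply/exists_inP.
  case: (boolP ((sn f <= (fs d)) || ((sn d) <= fs f))) => h1.
    by exists x' => //; rewrite inE hx' /=; clear -h1 hx'b; nlia.
  case: (ltnP (fs f) (fs d)) => h2.
    exists (o1 d); last by clear -h1 h2 sb hpq; nlia.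
    by rewrite inE P1 /=; clear; nlia.
  exists (o2 d); last by clear -h1 h2 sa sb hpq Hne; nlia.
  by rewrite inE P2 /=; clear; nlia.
- apply/exists_inP.
  case: (leqP (sn f) (fs d)) => h1.
    exists (o2 d); last by clear -h1 hpq; nlia.
    by rewrite inE P2 /=; clear; nlia.
  case: (leqP (sn d) (fs f)) => h2.
    exists (o1 d); last by clear -h2 hpq hab; nlia.
    by rewrite inE P1 /=; clear; nlia.
  by exists z' => //; rewrite inE hz' /=; clear -h1 h2 sa sb hz'o hab hpq; nlia.
Qed.

Lemma ends1 g : sdiag S1 g -> (fs d <= fs g) && (sn g <= sn d).
Proof.
case/and4P => h1 h2 _ _; move: h1 h2; rewrite !inE => /andP [_ h1] /andP [_ h2].
move: h1 h2; rewrite !o1E !o2E; lia.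
Qed.
Lemma ends2 g : sdiag S2 g -> ((fs g <= fs d) || (sn d <= fs g)) && ((sn g <= fs d) || (sn d <= sn g)).
Proof.
case/and4P => h1 h2 _ _; move: h1 h2; rewrite !inE => /andP [_ h1] /andP [_ h2].
move: h1 h2; rewrite !o1E !o2E; lia.
Qed.
Lemma nd1 : ~~ sdiag S1 d.
Proof.
apply/negP => /and4P [_ _ _ /exists_inP [x]]; rewrite inE => /andP [_ h1] h2.
move: h1 h2; lia.
Qed.
Lemma nd2 : ~~ sdiag S2 d.
Proof.
apply/negP => /and4P [_ _ /exists_inP [x]]; rewrite inE => /andP [_ h1] h2 _.
move: h1 h2; lia.
Qed.
Lemma not_both f : sdiag S1 f -> sdiag S2 f -> False.
Proof.
move=> h1 h2; have e1 := ends1 h1; have e2 := ends2 h2; have hab := diag_lt f.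
have E : f = d by apply: diag_eq; move: e1 e2 hab; clear; lia.
by move: h1; rewrite E (negbTE nd1).
Qed.

Lemma decomp : T = d |: (T1 :|: T2).
Proof.
apply/setP => f; rewrite !inE. case: (eqVneq f d) => [->|nfd]; first by rewrite Hd.
rewrite /=; apply/idP/idP => [Hf|/orP [] /andP [] //].
by case/orP: (side Hf nfd) => ->; rewrite Hf ?orbT.
Qed.

Lemma cardT : #|T| = (#|T1| + #|T2|).+1.
Proof.
rewrite {1}decomp cardsU1 cardsU.
have -> : T1 :&: T2 = set0.
  apply/setP => f; rewrite !inE; apply/negP => /andP [/andP [_ h1] /andP [_ h2]].
  exact: (not_both h1 h2).
rewrite cards0 subn0 !inE (negbTE nd1) (negbTE nd2) !andbF /=. by [].
Qed.

Lemma cardS12 : #|S1| + #|S2| = #|S| + 2.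
Proof.
have [P1 P2 _ _] := and4P HdS.
have hpq := pq.
rewrite -cardsUI.
have -> : S1 :|: S2 = S.
  apply/setP => x; rewrite !inE; case: (x \in S) => //=; clear; lia.
have -> : S1 :&: S2 = [set o1 d; o2 d].
  apply/setP => x; rewrite !inE.
  case: (eqVneq x (o1 d)) => [->|n1].
    by rewrite P1 /= o1E; clear -hpq; lia.
  case: (eqVneq x (o2 d)) => [->|n2].
    by rewrite P2 /= o2E; clear -hpq; lia.
  have n1' : (x : nat) != fs d by rewrite -o1E val_eqE.
  have n2' : (x : nat) != sn d by rewrite -o2E val_eqE.
  case: (x \in S) => //=; clear -n1' n2'; lia.
rewrite cards2. have -> : o1 d != o2 d by rewrite -val_eqE /= o1E o2E; clear -hpq; lia.
by [].
Qed.

Lemma boundsS : [/\ 3 <= #|S1|, #|S1| < #|S|, 3 <= #|S2| & #|S2| < #|S|].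
Proof.
have /and4P [P1 P2 /exists_inP [x hx hxb] /exists_inP [z hz hzo]] := HdS.
have hpq := pq.
have ne : forall a b : 'I_n, (a : nat) != b -> a != b.
  by move=> a b; apply: contra => /eqP ->.
have S1S : S1 \subset S by apply/subsetP => y; rewrite inE => /andP [].
have S2S : S2 \subset S by apply/subsetP => y; rewrite inE => /andP [].
split.
- apply: (@card3 S1 (o1 d) x (o2 d)); rewrite ?inE ?P1 ?P2 ?hx ?o1E ?o2E /=;
  try (apply: ne; rewrite ?o1E ?o2E); clear -hpq hxb; lia.
- apply: proper_card; apply/properP; split => //; exists z => //.
  rewrite inE hz /=; clear -hzo; lia.
- apply: (@card3 S2 (o1 d) z (o2 d)); rewrite ?inE ?P1 ?P2 ?hz ?o1E ?o2E /=;
  try (apply: ne; rewrite ?o1E ?o2E); clear -hpq hzo; lia.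
- apply: proper_card; apply/properP; split => //; exists x => //.
  rewrite inE hx /=; clear -hxb; lia.
Qed.

Lemma max1 : maxnc S1 T1.
Proof.
case: HT => Hsub Hnc Hmax.
have T1T : T1 \subset T by apply/subsetP => f; rewrite inE => /andP [].
split.
- by move=> f; rewrite inE => /andP [].
- exact: noncrossing_sub T1T Hnc.
move=> g Hg Hgn; rewrite inE Hg andbT.
have S1S : S1 \subset S by apply/subsetP => y; rewrite inE => /andP [].
apply: Hmax; first exact: sdiag_subset S1S Hg.
rewrite noncrossing_U1 Hnc /=; apply/forall_inP => f.
have eg := ends1 Hg; have hg := diag_lt g.
rewrite {1}decomp !inE => /orP [/eqP ->|/orP [/andP [hf h1]|/andP [hf h2]]].
- rewrite crossesE; move: eg hg; rewrite /cr; clear; lia.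
- move: Hgn; rewrite noncrossing_U1 => /andP [_ /forall_inP]; apply.
  by rewrite inE hf.
- have ef := ends2 h2; have hf' := diag_lt f.
  rewrite crossesE; move: eg hg ef hf'; rewrite /cr; clear; lia.
Qed.

Lemma max2 : maxnc S2 T2.
Proof.
case: HT => Hsub Hnc Hmax.
have T2T : T2 \subset T by apply/subsetP => f; rewrite inE => /andP [].
split.
- by move=> f; rewrite inE => /andP [].
- exact: noncrossing_sub T2T Hnc.
move=> g Hg Hgn; rewrite inE Hg andbT.
have S2S : S2 \subset S by apply/subsetP => y; rewrite inE => /andP [].
apply: Hmax; first exact: sdiag_subset S2S Hg.
rewrite noncrossing_U1 Hnc /=; apply/forall_inP => f.
have eg := ends2 Hg; have hg := diag_lt g; have hpq := pq.
rewrite {1}decomp !inE => /orP [/eqP ->|/orP [/andP [hf h1]|/andP [hf h2]]].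
- rewrite crossesE; move: eg hg hpq; rewrite /cr; clear; lia.
- have ef := ends1 h1; have hf' := diag_lt f.
  rewrite crossesE; move: eg hg ef hf'; rewrite /cr; clear; lia.
- move: Hgn; rewrite noncrossing_U1 => /andP [_ /forall_inP]; apply.
  by rewrite inE hf.
Qed.
End Split.

Lemma tri_size_ind m : forall S T, #|S| < m -> 3 <= #|S| -> maxnc S T -> #|T| = #|S| - 3.
Proof.
elim: m => [//|m IH] S T HSm HS3 HT.
case: (set_0Vmem T) => [T0 | [d Hd]].
  rewrite T0 cards0.
  case: (leqP #|S| 3) => h; first by lia.
  have [g Hg] := sdiag_ex h.
  case: HT => _ _ Hmax.
  have : g \in T.
    apply: Hmax => //; rewrite noncrossing_U1 T0; apply/andP; split.
      by apply/noncrossingP => ? ?; rewrite inE.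
    by apply/forall_inP => ?; rewrite inE.
  by rewrite T0 inE.
have [b1 b2 b3 b4] := boundsS HT Hd.
have e1 := IH _ _ (leq_trans b2 HSm) b1 (max1 HT Hd).
have e2 := IH _ _ (leq_trans b4 HSm) b3 (max2 HT Hd).
have := cardS12 HT Hd; have := cardT HT Hd.
lia.
Qed.


Lemma sdiagT d : sdiag [set: 'I_n] d.
Proof.
have [h1 h2 h3 h4] := diagP d.
apply/and4P; split; rewrite ?inE //.
  have hx : (fs d).+1 < n by lia.
  by apply/exists_inP; exists (Ordinal hx); rewrite ?inE //=; lia.
apply/exists_inP; case: (posnP (fs d)) => h0.
  have hx : n.-1 < n by lia.
  by exists (Ordinal hx); rewrite ?inE //=; lia.
have hx : 0 < n by lia.
by exists (Ordinal hx); rewrite ?inE //=; lia.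
Qed.

Lemma tri_size T : 3 <= n -> triangulation T -> #|T| = n - 3.
Proof.
move=> hn /andP [Hnc /forallP Hm].
have := @tri_size_ind n.+1 [set: 'I_n] T.
rewrite cardsT card_ord; apply => //.
split => //.
- by move=> f _; rewrite inE sdiagT.
- by move=> g _ hg; move/implyP: (Hm g); apply.
Qed.
End Size.
Local Open Scope ring_scope.

Section Real.
Variables (R : realFieldType) (n : nat).
Hypothesis hn : (4 <= n)%N.
Implicit Types (d e f g : diagonal n) (D E T : {set diagonal n}).

Definition cc : R := ((n - 3)%N%:R)^-1.
Definition Tr D := [set T : {set diagonal n} | triangulation T && (D \subset T)].
Definition NN D : R := (#|Tr D|)%:R.

Lemma cc_gt0 : 0 < cc.
Proof. rewrite /cc invr_gt0 ltr0n subn_gt0; exact: hn. Qed.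

Lemma PhiE D d : Phi R D d = (NN D)^-1 * \sum_(T in Tr D) PhiT R T d.
Proof. rewrite /Phi /NN; congr (_ * _); apply: eq_bigl => T; by rewrite inE. Qed.

Lemma PhiT_ge0 T d : 0 <= PhiT R T d.
Proof. rewrite /PhiT; case: ifP => // _; exact: ltW cc_gt0. Qed.
Lemma PhiT_le T d : PhiT R T d <= cc.
Proof. rewrite /PhiT; case: ifP => // _; exact: ltW cc_gt0. Qed.

Lemma NN_gt0 D : noncrossing D -> 0 < NN D.
Proof.
move=> /ext_tri [T [h1 h2]]; rewrite /NN ltr0n card_gt0; apply/set0Pn; exists T.
by rewrite inE h1 h2.
Qed.

Lemma Phi_ge0 D d : 0 <= Phi R D d.
Proof.
rewrite PhiE; apply: mulr_ge0; first by rewrite invr_ge0 /NN ler0n.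
by apply: sumr_ge0 => T _; apply: PhiT_ge0.
Qed.

Lemma sum_le D d : \sum_(T in Tr D) PhiT R T d <= NN D * cc.
Proof.
rewrite /NN mulr_natl -sumr_const; apply: ler_sum => T _; exact: PhiT_le.
Qed.

Lemma Phi_le D d : noncrossing D -> Phi R D d <= cc.
Proof.
move=> hD; rewrite PhiE ler_pdivrMl ?NN_gt0 //; exact: sum_le.
Qed.

Lemma Phi_in D d : noncrossing D -> d \in D -> Phi R D d = cc.
Proof.
move=> hD hd; rewrite PhiE.
rewrite (eq_bigr (fun _ => cc)); last first.
  move=> T; rewrite inE => /andP [_ /subsetP hs]; by rewrite /PhiT hs.
rewrite sumr_const -mulr_natl /NN mulrA mulVf ?mul1r //.
rewrite pnatr_eq0 -lt0n; move: (NN_gt0 hD); by rewrite /NN ltr0n.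
Qed.

Lemma Phi_cross D d : ~~ noncrossing (d |: D) -> Phi R D d = 0.
Proof.
move=> hnc; rewrite PhiE big1 ?mulr0 // => T; rewrite inE => /andP [/andP [hT _] hs].
rewrite /PhiT; case: ifP => // hdT; move: hnc; apply: contraNeq => _.
apply: noncrossing_sub hT; by rewrite subUset sub1set hdT hs.
Qed.

Lemma Phi_pos D d : noncrossing (d |: D) -> 0 < Phi R D d.
Proof.
move=> hnc.
have hD : noncrossing D by apply: noncrossing_sub hnc; apply: subsetUr.
have [T0 [hT0 hs0]] := ext_tri hnc.
have hT0D : T0 \in Tr D by rewrite inE hT0 (subset_trans _ hs0) // subsetUr.
rewrite PhiE mulr_gt0 ?invr_gt0 ?NN_gt0 //.
rewrite (bigD1 T0) //=. apply: ltr_pwDl.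
  by rewrite /PhiT (subsetP hs0) ?setU11 // cc_gt0.
by apply: sumr_ge0 => T _; apply: PhiT_ge0.
Qed.

Lemma Phi_lt D d : noncrossing D -> d \notin D -> Phi R D d < cc.
Proof.
move=> hD hdD.
have [T0 [hT0 hs0 hdT0]] : exists T0, [/\ triangulation T0, D \subset T0 & d \notin T0].
  case: (boolP (noncrossing (d |: D))) => hnc.
    have [e [hde hne]] := keyC hnc hdD.
    have [T0 [hT0 hs0]] := ext_tri hne.
    exists T0; split => //; first by apply: subset_trans hs0; apply: subsetUr.
    apply/negP => hdT.
    have /andP [hncT _] := hT0.
    move/noncrossingP: hncT => /(_ d e hdT (subsetP hs0 e (setU11 e D))).
    by rewrite hde.
  have [T0 [hT0 hs0]] := ext_tri hD.
  exists T0; split => //; apply/negP => hdT; move/negP: hnc; apply.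
  have /andP [hncT _] := hT0.
  apply: noncrossing_sub hncT; by rewrite subUset sub1set hdT hs0.
have hT0D : T0 \in Tr D by rewrite inE hT0 hs0.
rewrite PhiE ltr_pdivrMl ?NN_gt0 //.
rewrite /NN (cardsD1 T0) hT0D natrD mulrDl mul1r (bigD1 T0) //=.
rewrite {1}/PhiT (negbTE hdT0) add0r addrC ltr_pwDr ?cc_gt0 //.
rewrite (eq_bigl (fun T => T \in Tr D :\ T0)); last by move=> T; rewrite !inE andbC.
rewrite mulr_natl -sumr_const; apply: ler_sum => T _; exact: PhiT_le.
Qed.

Lemma Phi_sum D : noncrossing D -> \sum_d Phi R D d = 1.
Proof.
move=> hD.
rewrite (eq_bigr (fun d => (NN D)^-1 * \sum_(T in Tr D) PhiT R T d)); last by move=> d _; rewrite PhiE.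
rewrite -mulr_sumr exchange_big /=.
rewrite (eq_bigr (fun _ => 1)).
  rewrite sumr_const -/(NN D) mulVf //; apply: lt0r_neq0; exact: NN_gt0.
move=> T; rewrite inE => /andP [hT _].
rewrite /PhiT -big_mkcond /= sumr_const (tri_size _ hT); last exact: ltnW.
rewrite /cc; set x := (n - 3)%:R : R.
rewrite -mulr_natr -/x mulVf // /x pnatr_eq0 subn_eq0 -ltnNge; exact: hn.
Qed.

Definition chainw (w : {set diagonal n} -> R) :=
  [/\ forall D, 0 <= w D, forall D, w D != 0 -> noncrossing D &
      forall D E, w D != 0 -> w E != 0 -> (D \subset E) || (E \subset D)].
Definition supp (w : {set diagonal n} -> R) := [set D | w D != 0].

Lemma minchain (A : {set {set diagonal n}}) : A != set0 ->
  (forall D E, D \in A -> E \in A -> (D \subset E) || (E \subset D)) ->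
  exists2 D0, D0 \in A & forall E, E \in A -> D0 \subset E.
Proof.
case/set0Pn => X hX hch.
case: (arg_minnP (fun D : {set diagonal n} => #|D|) hX) => D0 hD0 hmin.
exists D0 => // E hE.
case/orP: (hch D0 E hD0 hE) => // hED.
have := hmin E hE => hc.
suff -> : D0 = E by [].
by apply/eqP; rewrite eq_sym eqEcard hED hc.
Qed.

Lemma Phi_ext_ge0 w d : chainw w -> 0 <= Phi_ext w d.
Proof.
case=> h0 h1 _; apply: sumr_ge0 => D _; apply: mulr_ge0 => //; exact: Phi_ge0.
Qed.

Lemma char w D0 : chainw w -> w D0 != 0 -> (forall E, w E != 0 -> D0 \subset E) ->
  forall d, (d \in D0) = (Phi_ext w d == cc * \sum_D w D).
Proof.
move=> [h0 h1 h2] hw hmin d.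
case: (boolP (d \in D0)) => hd.
  apply/esym/eqP; rewrite mulr_sumr /Phi_ext; apply: eq_bigr => D _.
  case: (eqVneq (w D) 0) => [->|hwD]; first by rewrite !mul0r mulr0.
  have hdD : d \in D := subsetP (hmin D hwD) d hd.
  by rewrite (Phi_in (h1 D hwD) hdD) mulrC.
apply/esym; apply: lt_eqF.
rewrite mulr_sumr /Phi_ext (bigD1 D0) //= [X in _ < X](bigD1 D0) //=.
apply: ltr_leD.
  rewrite [X in _ < X]mulrC ltr_pM2l ?Phi_lt ?h1 //.
  by rewrite lt_def hw h0.
apply: ler_sum => D _; rewrite [X in _ <= X]mulrC.
case: (eqVneq (w D) 0) => [->|hwD]; first by rewrite !mul0r.
by rewrite ler_wpM2l ?h0 ?Phi_le ?h1.
Qed.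

Lemma le_ab w1 w2 D0 : chainw w1 -> chainw w2 -> w1 D0 != 0 ->
  (forall E, w1 E != 0 -> D0 \subset E) -> Phi_ext w1 =1 Phi_ext w2 -> w2 D0 <= w1 D0.
Proof.
move=> c1 c2 hw hmin hext.
have [h10 h11 h12] := c1; have [h20 h21 h22] := c2.
have hD0 := h11 _ hw.
have [e [he0 he1]] : exists e, 0 < Phi R D0 e /\
    forall D, w1 D != 0 -> D != D0 -> Phi R D e = 0.
  case: (boolP (supp w1 :\ D0 == set0)) => hs.
    have [T [hT hsT]] := ext_tri hD0.
    have : T != set0.
      by rewrite -card_gt0 (tri_size _ hT) ?subn_gt0 //; apply: ltnW.
    case/set0Pn => e he; exists e; split.
      apply: Phi_pos; case/andP: hT => hT _; apply: noncrossing_sub hT.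
      by rewrite subUset sub1set he hsT.
    move=> D hwD hne; move/eqP: hs => /setP /(_ D); by rewrite !inE hne hwD.
  have [D1 hD1 hmin1] := @minchain (supp w1 :\ D0) hs
    ltac:(move=> D E; rewrite !inE => /andP [_ hD] /andP [_ hE]; exact: h12).
  move: (hD1); rewrite !inE => /andP [hne1 hw1].
  have hsub := hmin D1 hw1.
  have : D0 \proper D1 by rewrite properEneq eq_sym hne1 hsub.
  case/properP => _ [d hd1 hd0].
  have hnc : noncrossing (d |: D0).
    apply: noncrossing_sub (h11 _ hw1); by rewrite subUset sub1set hd1 hsub.
  have [e [hde hne]] := keyC hnc hd0.
  exists e; split; first exact: Phi_pos.
  move=> D hwD hDD0; apply: Phi_cross; apply/negP => /noncrossingP H.
  have hdD : d \in D by apply: (subsetP (hmin1 D _)) => //; rewrite !inE hDD0 hwD.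
  move: (H e d (setU11 e D) ltac:(by rewrite !inE hdD orbT)).
  by rewrite crossesC hde.
have E1 : Phi_ext w1 e = w1 D0 * Phi R D0 e.
  rewrite /Phi_ext (bigD1 D0) //= big1 ?addr0 // => D hD.
  case: (eqVneq (w1 D) 0) => [->|hwD]; first by rewrite mul0r.
  by rewrite he1 ?mulr0.
have E2 : w2 D0 * Phi R D0 e <= Phi_ext w2 e.
  rewrite /Phi_ext (bigD1 D0) //= lerDl; apply: sumr_ge0 => D _.
  by apply: mulr_ge0 => //; apply: Phi_ge0.
rewrite -(ler_pM2r he0) -E1 hext; exact: E2.
Qed.

Definition rm (w : {set diagonal n} -> R) D0 := fun D => if D == D0 then 0 else w D.

Lemma ext_split w D0 d : Phi_ext w d = w D0 * Phi R D0 d + Phi_ext (rm w D0) d.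
Proof.
rewrite /Phi_ext (bigD1 D0) //= [X in _ = _ + X](bigD1 D0) //= /rm eqxx mul0r add0r.
congr (_ + _); apply: eq_bigr => D hD; by rewrite (negbTE hD).
Qed.

Lemma sum_split (w : {set diagonal n} -> R) D0 : \sum_D w D = w D0 + \sum_D rm w D0 D.
Proof.
rewrite (bigD1 D0) //= [X in _ = _ + X](bigD1 D0) //= /rm eqxx add0r.
congr (_ + _); apply: eq_bigr => D hD; by rewrite (negbTE hD).
Qed.

Lemma chain_rm w D0 : chainw w -> chainw (rm w D0).
Proof.
case=> h0 h1 h2; split; rewrite /rm.
- by move=> D; case: ifP.
- by move=> D; case: ifP => _; [rewrite eqxx | apply: h1].
- move=> D E; case: ifP => _; first by rewrite eqxx.
  case: ifP => _; first by rewrite eqxx.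
  exact: h2.
Qed.

Lemma supp_rm w D0 : w D0 != 0 -> (#|supp (rm w D0)| < #|supp w|)%N.
Proof.
move=> hw.
have -> : supp (rm w D0) = supp w :\ D0.
  apply/setP => D; rewrite !inE /rm; case: (eqVneq D D0) => [->|hD] //=.
  by rewrite eqxx.
rewrite [X in (_ < X)%N](cardsD1 D0) !inE hw /=. by [].
Qed.

Lemma zero_case w1 w2 : supp w1 == set0 -> chainw w2 -> \sum_D w1 D = \sum_D w2 D -> w1 =1 w2.
Proof.
move=> hs [h0 _ _] hsum.
have z1 : forall D, w1 D = 0.
  move=> D; apply/eqP; apply: contraTT hs => hD; apply/set0Pn; exists D; by rewrite inE.
have hs2 : \sum_D w2 D = 0 by rewrite -hsum big1.
move=> D; rewrite z1; apply/esym; exact: (psumr_eq0P (fun D _ => h0 D) hs2).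
Qed.

Lemma inj_ind k : forall w1 w2, (#|supp w1| + #|supp w2| < k)%N -> chainw w1 -> chainw w2 ->
  \sum_D w1 D = \sum_D w2 D -> Phi_ext w1 =1 Phi_ext w2 -> w1 =1 w2.
Proof.
elim: k => [//|k IH] w1 w2 hk c1 c2 hsum hext.
case: (boolP (supp w1 == set0)) => hs1; first exact: zero_case.
case: (boolP (supp w2 == set0)) => hs2.
  move=> D; apply/esym; move: D; apply: zero_case => //.
have [h10 h11 h12] := c1; have [h20 h21 h22] := c2.
have [D0 hD0 hmin1] := minchain hs1
  ltac:(move=> D E; rewrite !inE; exact: h12).
have [E0 hE0 hmin2] := minchain hs2
  ltac:(move=> D E; rewrite !inE; exact: h22).
move: hD0 hE0; rewrite !inE => hw1 hw2.
have m1 : forall E, w1 E != 0 -> D0 \subset E by move=> E hE; apply: hmin1; rewrite inE.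
have m2 : forall E, w2 E != 0 -> E0 \subset E by move=> E hE; apply: hmin2; rewrite inE.
have eq : D0 = E0.
  apply/setP => d; rewrite (char c1 hw1 m1) (char c2 hw2 m2) hext hsum. by [].
subst E0.
have hab : w1 D0 = w2 D0.
  apply/le_anti/andP; split.
    by apply: (le_ab c2 c1 hw2 m2) => d; rewrite hext.
  exact: (le_ab c1 c2 hw1 m1 hext).
have IH' := IH (rm w1 D0) (rm w2 D0).
have := supp_rm hw1; have := supp_rm hw2 => l2 l1.
have H := IH' ltac:(lia) (chain_rm D0 c1) (chain_rm D0 c2).
have H' : rm w1 D0 =1 rm w2 D0.
  apply: H.
    by apply: (addrI (w1 D0)); rewrite -sum_split hab -sum_split.
  move=> d; apply: (addrI (w1 D0 * Phi R D0 d)).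
  by rewrite -ext_split hab -ext_split.
move=> D; case: (eqVneq D D0) => [->//|hD].
by have := H' D; rewrite /rm (negbTE hD).
Qed.
End Real.

Unset Implicit Arguments.
Theorem proposition11 (R : realFieldType) (n : nat) (hn : (4 <= n)%N) :
  (forall w : {set diagonal n} -> R, K_point w -> in_chamber (Phi_ext w)) /\
  (forall w1 w2 : {set diagonal n} -> R, K_point w1 -> K_point w2 ->
     Phi_ext w1 =1 Phi_ext w2 -> w1 =1 w2).
Proof.
split.
- move=> w [h0 h1 h2 h3]; split.
    move=> d; apply: sumr_ge0 => D _; apply: mulr_ge0 => //; exact: Phi_ge0.
  rewrite /Phi_ext exchange_big /= -h1; apply: eq_bigr => D _.
  rewrite -mulr_sumr; case: (eqVneq (w D) 0) => [->|hw]; first by rewrite !mul0r.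
  by rewrite (@Phi_sum R n hn D (h2 D hw)) mulr1.
- move=> w1 w2 [a0 a1 a2 a3] [b0 b1 b2 b3] hext.
  have c1 : chainw w1 by split.
  have c2 : chainw w2 by split.
  have hs : \sum_D w1 D = \sum_D w2 D by rewrite a1 b1.
  exact: (@inj_ind R n hn _ w1 w2 (ltnSn _) c1 c2 hs hext).
Qed.
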